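(* Let $T\in B(\mathcal{F})$ be a block-diagonal operator satisfying \[\sum_{n=1}^\infty\|T|_{\mathcal{F}_{n+1}}-(T|_{\mathcal{F}_n})\otimes I\|<\infty,\] where $(T|_{\mathcal{F}_n})\otimes I$ acts on $\mathcal{F}_{n+1}=\mathcal{F}_n\otimes\mathbb{C}^d$. Then $T\in\mathcal{C}=C^*(L_1,\ldots,L_d)$.
   Context: $d\ge2$; $\xi_1,\ldots,\xi_d$ is the standard orthonormal basis of $\mathbb{C}^d$. $\mathcal{F}=\bigoplus_{n\ge0}\mathcal{F}_n$ is the full Fock space, $\mathcal{F}_0=\mathbb{C}\Omega$, $\mathcal{F}_n=(\mathbb{C}^d)^{\otimes n}$ with the usual inner product. $L_j\eta=\xi_j\otimes\eta$ (and $L_j\Omega=\xi_j$) are the left creation operators. $T$ is block-diagonal if $T(\mathcal{F}_n)\subseteq\mathcal{F}_n$ for all $n$. *)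

(* Defs.v *)
(* The full Fock space over C^d is modelled by its
   orthonormal basis indexed by words (seq 'I_d): the word [:: j1; ...; jn]
   stands for xi_j1 (x) ... (x) xi_jn, the empty word for Omega.
   An operator is given by its matrix  A u w = <e_u, A e_w>. *)
From HB Require Import structures.
From mathcomp Require Import all_boot all_order all_algebra.
From mathcomp Require Import complex.
From mathcomp Require Import reals.
Set Implicit Arguments. Unset Strict Implicit. Unset Printing Implicit Defensive.
Import Order.TTheory GRing.Theory Num.Theory.
Local Open Scope ring_scope.

Definition word (d : nat) := seq 'I_d.

Definition fock_op (R : realType) (d : nat) := word d -> word d -> R[i].

Definition normsq (R : realType) (z : R[i]) : R :=
  (complex.Re z) ^+ 2 + (complex.Im z) ^+ 2.

(* Since finitely
   supported vectors are dense and the P_s converge strongly to I, this is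
   exactly "A is bounded with operator norm at most c". *)
Definition opnorm_le (R : realType) (d : nat) (A : fock_op R d) (c : R) : Prop :=
  0 <= c /\
  forall (s : seq (word d)) (x : word d -> R[i]), uniq s ->
    \sum_(u <- s) normsq (\sum_(w <- s) A u w * x w)
      <= c ^+ 2 * \sum_(w <- s) normsq (x w).

Definition bounded_op (R : realType) (d : nat) (A : fock_op R d) : Prop :=
  exists c : R, opnorm_le A c.

Definition block_diagonal (R : realType) (d : nat) (T : fock_op R d) : Prop :=
  forall u w : word d, size u != size w -> T u w = 0.

(* T|_{F_{n+1}} - (T|_{F_n}) (x) I, viewed as an operator on F (zero off
   F_{n+1}); F_{n+1} = F_n (x) C^d, the last letter being the C^d factor. *)
Definition tensor_defect (R : realType) (d : nat) (T : fock_op R d) (n : nat)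
  : fock_op R d :=
  fun u w =>
    if (size u == n.+1) && (size w == n.+1) then
      T u w - T (take n u) (take n w) * (drop n u == drop n w)%:R
    else 0.

(* Left creation operators and their adjoints, acting on basis vectors:
   a letter (false, j) is L_j, a letter (true, j) is L_j^*. *)
Definition letter_act (d : nat) (x : bool * 'I_d) (w : word d) : option (word d) :=
  if ~~ x.1 then Some (x.2 :: w)
  else match w with
       | i :: w' => if i == x.2 then Some w' else None
       | [::] => None
       end.

(* a *-monomial x_1 x_2 ... x_k in L_1..L_d, L_1^*..L_d^* (the empty one is I);
   it maps a basis vector to a basis vector or to 0 *)
Definition monomial_act (d : nat) (m : seq (bool * 'I_d)) (w : word d)
  : option (word d) :=
  foldr (fun x ow => obind (letter_act x) ow) (Some w) m.

Definition starpoly (R : realType) (d : nat) := seq (R[i] * seq (bool * 'I_d)).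

Definition starpoly_op (R : realType) (d : nat) (p : starpoly R d) : fock_op R d :=
  fun u w => \sum_(t <- p) t.1 * (monomial_act t.2 w == Some u)%:R.

Definition in_Cuntz_Toeplitz (R : realType) (d : nat) (T : fock_op R d) : Prop :=
  forall eps : R, 0 < eps ->
    exists p : starpoly R d, opnorm_le (fun u w => T u w - starpoly_op p u w) eps.

(* Main.v *)
Require Import Defs.
From HB Require Import structures.
From mathcomp Require Import all_boot all_order all_algebra.
From mathcomp Require Import complex.
From mathcomp Require Import reals.
From mathcomp Require Import classical_sets.
From mathcomp Require Import lra ring.
Import Order.TTheory GRing.Theory Num.Theory.
Local Open Scope ring_scope.
Set Implicit Arguments. Unset Strict Implicit.

Section S.
Variable R : realType.

Lemma normsq_ge0 (z : R[i]) : 0 <= normsq z.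
Proof. by rewrite /normsq addr_ge0 // sqr_ge0. Qed.

Lemma normsq_eq0 (z : R[i]) : normsq z = 0 -> z = 0.
Proof.
case: z => a b; rewrite /normsq /= => /eqP.
rewrite paddr_eq0 ?sqr_ge0 // !sqrf_eq0 => /andP[/eqP-> /eqP->] //.
Qed.

Lemma normsq_add (a b : R) (y z : R[i]) :
  a * b * normsq (y + z) <= b * (a + b) * normsq y + a * (a + b) * normsq z.
Proof.
case: y => y1 y2; case: z => z1 z2; rewrite /normsq /=.
have h1 := sqr_ge0 (b * y1 - a * z1).
have h2 := sqr_ge0 (b * y2 - a * z2).
nra.
Qed.
End S.

Section S.
Variable R : realType.
Variable d : nat.

Lemma sum_normsq_ge0 (s : seq (word d)) (f : word d -> R[i]) :
  0 <= \sum_(u <- s) normsq (f u).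
Proof. by apply: sumr_ge0 => u _; apply: normsq_ge0. Qed.

Lemma sum_normsq_le0 (s : seq (word d)) (f : word d -> R[i]) :
  \sum_(u <- s) normsq (f u) <= 0 -> forall u, u \in s -> f u = 0.
Proof.
elim: s => [|v s IH] //=; rewrite big_cons => H u.
have h1 := normsq_ge0 (f v); have h2 := sum_normsq_ge0 s f.
rewrite in_cons => /orP[/eqP->|us].
  by apply: normsq_eq0; apply/eqP; rewrite eq_le h1 andbT; lra.
by apply: IH => //; lra.
Qed.

Lemma opnorm_add (A B : fock_op R d) a b :
  opnorm_le A a -> opnorm_le B b -> opnorm_le (fun u w => A u w + B u w) (a + b).
Proof.
move=> [a0 HA] [b0 HB]; split; first by rewrite addr_ge0.
move=> s x us.
set y := fun u => \sum_(w <- s) A u w * x w.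
set z := fun u => \sum_(w <- s) B u w * x w.
have E : forall u, \sum_(w <- s) (A u w + B u w) * x w = y u + z u.
  by move=> u; rewrite /y /z -big_split /=; apply: eq_bigr => w _; rewrite mulrDl.
under eq_bigr do rewrite E.
have HY := HA s x us; have HZ := HB s x us.
rewrite -/y -/z in HY HZ *.
set X := \sum_(w <- s) normsq (x w) in HY HZ *.
have X0 : 0 <= X by apply: sum_normsq_ge0.
have [ea|an0] := eqVneq a 0.
  subst a.
  have y0 : forall u, u \in s -> y u = 0.
    by apply: sum_normsq_le0; rewrite expr0n /= mul0r in HY.
  rewrite (eq_big_seq (fun u => normsq (z u))) ?add0r //.
  by move=> u us'; rewrite y0 // add0r.
have [eb|bn0] := eqVneq b 0.
  subst b.
  have z0 : forall u, u \in s -> z u = 0.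
    by apply: sum_normsq_le0; rewrite expr0n /= mul0r in HZ.
  rewrite (eq_big_seq (fun u => normsq (y u))) ?addr0 //.
  by move=> u us'; rewrite z0 // addr0.
have ap : 0 < a by rewrite lt_def an0 a0.
have bp : 0 < b by rewrite lt_def bn0 b0.
have abp : 0 < a * b by rewrite mulr_gt0.
rewrite -(ler_pM2l abp).
have S1 : a * b * \sum_(u <- s) normsq (y u + z u) <=
   \sum_(u <- s) (b * (a + b) * normsq (y u) + a * (a + b) * normsq (z u)).
  by rewrite mulr_sumr; apply: ler_sum => u _; apply: normsq_add.
apply: le_trans S1 _.
rewrite big_split /= -!mulr_sumr.
set Y := \sum_(u <- s) normsq (y u) in HY *.
set Z := \sum_(u <- s) normsq (z u) in HZ *.
have h1 : 0 <= b * (a + b) by rewrite mulr_ge0 // addr_ge0.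
have h2 : 0 <= a * (a + b) by rewrite mulr_ge0 // addr_ge0.
have := ler_wpM2l h1 HY; have := ler_wpM2l h2 HZ.
move=> e1 e2.
apply: le_trans (lerD e2 e1) _.
rewrite le_eqVlt; apply/orP; left; apply/eqP; ring.
Qed.

Lemma opnorm_mono (A : fock_op R d) a b : a <= b -> opnorm_le A a -> opnorm_le A b.
Proof.
move=> ab [a0 HA]; split; first exact: le_trans ab.
move=> s x us; apply: le_trans (HA s x us) _.
apply: ler_wpM2r; first exact: sum_normsq_ge0.
by rewrite ler_sqr ?nnegrE // (le_trans a0 ab).
Qed.

Lemma opnorm_zero : opnorm_le (fun _ _ : word d => 0 : R[i]) 0.
Proof.
split => // s x us; rewrite expr0n /= mul0r.
rewrite big1 // => u _.
rewrite big1 => [|w _]; last by rewrite mul0r.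
by rewrite /normsq /= expr0n /= addr0.
Qed.

Lemma opnorm_ext (A B : fock_op R d) c :
  (forall u w, A u w = B u w) -> opnorm_le A c -> opnorm_le B c.
Proof.
move=> E [c0 H]; split => // s x us; apply: le_trans (H s x us).
by rewrite le_eqVlt; apply/orP; left; apply/eqP; apply: eq_bigr => u _;
  congr normsq; apply: eq_bigr => w _; rewrite E.
Qed.

Lemma opnorm_sum (A : nat -> fock_op R d) (a : nat -> R) m n :
  (forall k, opnorm_le (A k) (a k)) ->
  opnorm_le (fun u w => \sum_(m <= k < n) A k u w) (\sum_(m <= k < n) a k).
Proof.
move=> H; elim: n => [|n IH].
  rewrite big_geq //.
  by apply: (opnorm_ext _ opnorm_zero) => u w; rewrite big_geq.
case: (leqP m n) => mn.
  rewrite big_nat_recr //=.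
  apply: (opnorm_ext _ (opnorm_add IH (H n))) => u w.
  by rewrite big_nat_recr.
rewrite big_geq //.
by apply: (opnorm_ext _ opnorm_zero) => u w; rewrite big_geq.
Qed.
End S.

Lemma sum_pick (V : nmodType) (I : eqType) (s : seq I) (a : I) (F : I -> V) :
  uniq s -> a \in s -> \sum_(u <- s) (if u == a then F u else 0) = F a.
Proof.
move=> us ais; rewrite (bigD1_seq a) //= eqxx big1 ?addr0 //.
by move=> u /negPf ->.
Qed.

Lemma sum_partition (V : nmodType) (I J : eqType) (s : seq I) (g : I -> J) (F : I -> V) :
  \sum_(u <- s) F u = \sum_(v <- undup (map g s)) \sum_(u <- s | g u == v) F u.
Proof.
under [RHS]eq_bigr do rewrite big_mkcond.
rewrite exchange_big /=; apply: eq_big_seq => u us.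
rewrite (eq_bigr (fun v => if v == g u then F u else 0)); last first.
  by move=> v _; rewrite eq_sym.
rewrite sum_pick ?undup_uniq // mem_undup; exact: map_f.
Qed.

Section S.
Variable R : realType.
Variable d : nat.

Lemma opnorm_tensor (D : fock_op R d) c n :
  opnorm_le D c ->
  opnorm_le (fun u w => D (take n u) (take n w) * (drop n u == drop n w)%:R) c.
Proof.
move=> [c0 HD]; split => // s x us.
set g := drop n; set h := take n.
rewrite (sum_partition _ g) [X in _ <= _ * X](sum_partition _ g) mulr_sumr.
apply: ler_sum => v _.
set sv := [seq h u | u <- s & g u == v].
have uv : uniq sv.
  rewrite map_inj_in_uniq ?filter_uniq // => u w.
  rewrite !mem_filter => /andP[/eqP gu _] /andP[/eqP gw _] e.
  by rewrite -(cat_take_drop n u) -(cat_take_drop n w) -/h -/g e gu gw.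
have := HD sv (fun b => x (b ++ v)) uv.
rewrite /sv !big_map !big_filter.
have xv : forall w, g w == v -> x (h w ++ v) = x w.
  by move=> w /eqP <-; rewrite cat_take_drop.
move=> Hv; apply: le_trans _ (le_trans Hv _); last first.
  rewrite le_eqVlt; apply/orP; left; apply/eqP; congr (_ * _).
  by apply: eq_bigr => w /xv xw; rewrite xw.
rewrite le_eqVlt; apply/orP; left; apply/eqP.
apply: eq_bigr => u /eqP gu.
congr normsq.
rewrite big_map big_filter [RHS]big_mkcond; apply: eq_bigr => w _.
rewrite -/g -/h gu; case: ifP => gw; last by rewrite eq_sym gw mulr0 mul0r.
rewrite eq_sym gw.
by rewrite mulr1 xv.
Qed.
End S.

Section S.
Variable R : realType.
Variable d : nat.
Implicit Types (u w a b v : word d).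

Definition mono a b : seq (bool * 'I_d) :=
  map (pair false) a ++ rev (map (pair true) b).

Lemma foldr_act (m : seq (bool * 'I_d)) (ow : option (word d)) :
  foldr (fun x ow => obind (letter_act x) ow) ow m = obind (monomial_act m) ow.
Proof.
case: ow => [w|] //=; elim: m => //= x m IH; by rewrite IH.
Qed.

Lemma monomial_act_cat (m1 m2 : seq (bool * 'I_d)) w :
  monomial_act (m1 ++ m2) w = obind (monomial_act m1) (monomial_act m2 w).
Proof. by rewrite /monomial_act foldr_cat foldr_act. Qed.

Lemma act_create a v : monomial_act (map (pair false) a) v = Some (a ++ v).
Proof. by elim: a => //= j a IH; rewrite IH. Qed.

Lemma act_annih b v :
  monomial_act (rev (map (pair true) b)) v =
  if take (size b) v == b then Some (drop (size b) v) else None.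
Proof.
elim: b v => [|j b IH] v /=; first by rewrite take0 drop0 eqxx.
rewrite rev_cons -cats1 monomial_act_cat /=.
case: v => [|i v] //=.
rewrite /letter_act /= eqseq_cons; case: (eqVneq i j) => [e|ne] /=.
  subst i.
  by rewrite IH.
by [].
Qed.

Lemma act_mono a b w :
  monomial_act (mono a b) w =
  if take (size b) w == b then Some (a ++ drop (size b) w) else None.
Proof.
rewrite /mono monomial_act_cat act_annih.
by case: ifP => //= _; rewrite act_create.
Qed.

Definition words n : seq (word d) := [seq tval t | t : n.-tuple 'I_d].

Lemma words_uniq n : uniq (words n).
Proof. by rewrite map_inj_uniq ?enum_uniq //; apply: val_inj. Qed.

Lemma mem_words n w : (w \in words n) = (size w == n).
Proof.
apply/idP/idP.
  by move=> /mapP[t _ ->]; rewrite size_tuple.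
move=> sw; apply/mapP; exists (Tuple sw) => //; by rewrite mem_enum.
Qed.

Definition Xpoly n (f : fock_op R d) : starpoly R d :=
  [seq (f p.1 p.2, mono p.1 p.2) | p <- [seq (a, b) | a <- words n, b <- words n]].

Lemma cat_eq n a u v : size a = n ->
  (u == a ++ v) = (take n u == a) && (drop n u == v).
Proof.
move=> sa; apply/eqP/andP => [->|[/eqP <- /eqP <-]]; last by rewrite cat_take_drop.
by rewrite take_size_cat // drop_size_cat.
Qed.

Lemma size_take_lt n u : (size u < n)%N -> size (take n u) != n.
Proof. by move=> nu; rewrite take_oversize ?(ltnW nu) // neq_ltn nu. Qed.

Lemma Xpoly_op n f u w :
  starpoly_op (Xpoly n f) u w =
  if (n <= size u)%N && (n <= size w)%N
  then f (take n u) (take n w) * (drop n u == drop n w)%:R else 0.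
Proof.
rewrite /starpoly_op /Xpoly big_map big_allpairs /=.
have E : forall a b, a \in words n -> b \in words n ->
    f a b * (monomial_act (mono a b) w == Some u)%:R =
    if a == take n u then (if b == take n w then
      f a b * (drop n u == drop n w)%:R else 0) else 0.
  move=> a b; rewrite !mem_words => /eqP sa /eqP sb.
  rewrite act_mono sb.
  have -> : ((if take n w == b then Some (a ++ drop n w) else None) == Some u)
       = (take n w == b) && (u == a ++ drop n w).
    by case: ifP.
  rewrite (cat_eq _ _ sa) (eq_sym a) (eq_sym b).
  by case: (take n u == a); case: (take n w == b); rewrite /= ?mulr0.
rewrite (eq_big_seq (fun a => if a == take n u then
     \sum_(b <- words n) (if b == take n w then f a b * (drop n u == drop n w)%:R else 0)
     else 0)); last first.
  move=> a aw; rewrite (eq_big_seq _ (E a ^~ aw)).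
  by case: ifP => // _; rewrite big1 // => b _; case: ifP.
case: (leqP n (size u)) => nu; last first.
  rewrite big1_seq // => a /andP[_]; rewrite mem_words => /eqP sa.
  case: eqP => // e; move: (size_take_lt nu); by rewrite -e sa eqxx.
rewrite sum_pick ?words_uniq ?mem_words ?size_takel //=.
case: (leqP n (size w)) => nw; last first.
  rewrite big1_seq // => b /andP[_]; rewrite mem_words => /eqP sb.
  case: eqP => // e; move: (size_take_lt nw); by rewrite -e sb eqxx.
by rewrite sum_pick ?words_uniq ?mem_words ?size_takel.
Qed.

Definition negp (p : starpoly R d) : starpoly R d := [seq (- t.1, t.2) | t <- p].

Lemma negp_op (p : starpoly R d) u w : starpoly_op (negp p) u w = - starpoly_op p u w.
Proof.
by rewrite /starpoly_op big_map -sumrN; apply: eq_bigr => t _; rewrite mulNr.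
Qed.

Lemma cat_op (p q : starpoly R d) u w : starpoly_op (p ++ q) u w = starpoly_op p u w + starpoly_op q u w.
Proof. by rewrite /starpoly_op big_cat. Qed.

Lemma flatten_op (L : seq (starpoly R d)) u w :
  starpoly_op (flatten L) u w = \sum_(q <- L) starpoly_op q u w.
Proof.
elim: L => [|q L IH]; first by rewrite big_nil /starpoly_op big_nil.
by rewrite /= cat_op IH big_cons.
Qed.
End S.

Section S.
Variable R : realType.
Variable d : nat.
Implicit Types (u w a b v : word d).
Variable T : fock_op R d.

Definition Tn n : fock_op R d :=
  fun a b => T (take n a) (take n b) * (drop n a == drop n b)%:R.

Definition polyN N : starpoly R d :=
  Xpoly N T ++ flatten [seq Xpoly n T ++ negp (Xpoly n.+1 (Tn n)) | n <- index_iota 0 N].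

Definition Ek k : fock_op R d :=
  fun u w => tensor_defect T k (take k.+1 u) (take k.+1 w) * (drop k.+1 u == drop k.+1 w)%:R.

Lemma drop_eq_size n u w : (n <= size u)%N -> (n <= size w)%N ->
  drop n u == drop n w -> size u = size w.
Proof.
move=> nu nw /eqP /(congr1 size); rewrite !size_drop => e.
by rewrite -(subnK nu) -(subnK nw) e.
Qed.

Lemma eq_take_drop1 (x y : word d) : (take 1 x == take 1 y) && (drop 1 x == drop 1 y) = (x == y).
Proof.
apply/andP/eqP => [[/eqP e1 /eqP e2]|->] //.
by rewrite -(cat_take_drop 1 x) e1 e2 cat_take_drop.
Qed.

Lemma delta_step k u w :
  ((drop k (take k.+1 u) == drop k (take k.+1 w)) && (drop k.+1 u == drop k.+1 w))
  = (drop k u == drop k w).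
Proof.
by rewrite -!(take_drop 1 k) -[k.+1]/(1 + k)%N -!drop_drop eq_take_drop1.
Qed.

Lemma natrb (b1 b2 : bool) : (b1%:R : R[i]) * b2%:R = (b1 && b2)%:R.
Proof. by rewrite -natrM mulnb. Qed.

Lemma X_Tn n u w :
  starpoly_op (Xpoly n.+1 (Tn n)) u w =
  if (n < size u)%N && (n < size w)%N then Tn n u w else 0.
Proof.
rewrite Xpoly_op; case: ifP => // _.
by rewrite /Tn !take_takel // -mulrA natrb delta_step.
Qed.

Lemma polyN_op N u w :
  starpoly_op (polyN N) u w =
  starpoly_op (Xpoly N T) u w +
  \sum_(0 <= n < N) (starpoly_op (Xpoly n T) u w - starpoly_op (Xpoly n.+1 (Tn n)) u w).
Proof.
rewrite /polyN cat_op flatten_op big_map; congr (_ + _).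
by apply: eq_bigr => n _; rewrite cat_op negp_op.
Qed.

Lemma Ek_big k u w : (size u <= k)%N -> Ek k u w = 0.
Proof.
move=> uk; rewrite /Ek /tensor_defect take_oversize ?(leq_trans uk) //.
by rewrite (negbTE (_ : size u != k.+1)) ?mul0r // neq_ltn ltnS uk.
Qed.

Lemma Ek_bigw k u w : (size w <= k)%N -> Ek k u w = 0.
Proof.
move=> wk; rewrite /Ek /tensor_defect [take k.+1 w]take_oversize ?(leq_trans wk) //.
by rewrite (negbTE (_ : size w != k.+1)) ?andbF ?mul0r // neq_ltn ltnS wk.
Qed.

Lemma Ek_small k u w : (k < size u)%N -> (k < size w)%N ->
  Ek k u w = Tn k.+1 u w - Tn k u w.
Proof.
move=> ku kw; rewrite /Ek /tensor_defect !size_takel // !eqxx /= mulrBl.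
by rewrite /Tn -mulrA natrb delta_step !take_takel.
Qed.

Lemma Tn_full n u w : size u = n -> size w = n -> Tn n u w = T u w.
Proof.
move=> su sw; rewrite /Tn !take_oversize ?su ?sw // !drop_oversize ?su ?sw //.
by rewrite eqxx mulr1.
Qed.

Hypothesis bd : block_diagonal T.

Lemma main_identity N M u w : (size u < M)%N -> (size w < M)%N ->
  T u w - starpoly_op (polyN N) u w = \sum_(N <= k < M) Ek k u w.
Proof.
move=> uM wM; rewrite polyN_op.
have [e|ne] := eqVneq (size u) (size w); last first.
  have Z : forall n (X : R[i]), (if (n <= size u)%N && (n <= size w)%N
           then X * (drop n u == drop n w)%:R else 0) = 0.
    move=> n X; case: ifP => // /andP[nu nw].
    case: eqP => [/eqP/(drop_eq_size nu nw) e|_]; last by rewrite mulr0.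
    by rewrite e eqxx in ne.
  rewrite bd // Xpoly_op Z big1 => [|n _]; last first.
    rewrite Xpoly_op Z X_Tn; case: ifP => [/andP[nu nw]|_]; last by rewrite subrr.
    rewrite /Tn; case: eqP => [/eqP/(drop_eq_size (ltnW nu) (ltnW nw)) e1|_]; last by rewrite mulr0 subrr.
    by rewrite e1 eqxx in ne.
  rewrite big1 => [|k _]; first by rewrite addr0 subrr.
  case: (leqP (size u) k) => uk; first exact: Ek_big.
  case: (leqP (size w) k) => wk; first exact: Ek_bigw.
  rewrite /Ek; case: eqP => [/eqP/(drop_eq_size uk wk) e|_]; last by rewrite mulr0.
  by rewrite e eqxx in ne.
set m := size u.
have piece : forall n, starpoly_op (Xpoly n T) u w - starpoly_op (Xpoly n.+1 (Tn n)) u w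
    = if n == m then T u w else 0.
  move=> n; rewrite Xpoly_op X_Tn -/(Tn n u w) -e -/m.
  case: (ltngtP n m) => nm.
  - by rewrite /= subrr.
  - by rewrite /= subrr.
  - by rewrite /= subr0 Tn_full // -e nm.
case: (ltnP m N) => mN.
  rewrite Xpoly_op -e -/m leqNgt mN /= add0r.
  rewrite (eq_bigr _ (fun n _ => piece n)) sum_pick ?iota_uniq ?mem_index_iota //.
  rewrite subrr big1_seq // => k /andP[_]; rewrite mem_index_iota => /andP[Nk _].
  by apply: Ek_big; rewrite -/m ltnW // (leq_trans mN).
rewrite big1_seq => [|n /andP[_]]; last first.
  rewrite mem_index_iota => /andP[_ nN]; rewrite piece.
  by case: eqP => // nm; move: nN; rewrite nm ltnNge mN.
rewrite addr0 Xpoly_op -e -/m mN /= -/(Tn N u w).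
have Z2 : \sum_(m <= k < M) Ek k u w = 0.
  by rewrite big1_seq // => k /andP[_]; rewrite mem_index_iota => /andP[mk _]; apply: Ek_big.
rewrite (big_cat_nat mN (ltnW uM)) /= Z2 addr0.
rewrite (eq_big_seq (fun k => Tn k.+1 u w - Tn k u w)); last first.
  move=> k; rewrite mem_index_iota => /andP[_ km]; apply: Ek_small => //.
  by rewrite -e.
by rewrite telescope_sumr // (@Tn_full m u w) // -e.
Qed.
End S.

Local Open Scope classical_set_scope.
Lemma tail_small (R : realType) (c : nat -> R) (B : R) :
  (forall n, 0 <= c n) -> (forall N, \sum_(1 <= n < N) c n <= B) ->
  forall eps, 0 < eps -> exists N, forall M, \sum_(N <= k < M) c k <= eps.
Proof.
move=> c0 HB eps epsp.
pose P K := \sum_(1 <= n < K) c n.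
pose E := [set x : R | exists K, x = P K].
have hub : has_ubound E by exists B => x [K ->]; apply: HB.
have hsup : has_sup E.
  by split => //; exists 0; exists 0%N; rewrite /P big_geq.
have [e [N ->] He] := sup_adherent epsp hsup.
have PN : P N <= P N.+1.
  case: N {He} => [|N]; first by rewrite /P !big_geq.
  by rewrite /P (big_nat_recr N.+1) //= lerDl.
exists N.+1 => M.
case: (leqP M N.+1) => h; first by rewrite big_geq // ltW.
have PM : P M <= sup E by apply: ub_le_sup => //; exists M.
have : P M = P N.+1 + \sum_(N.+1 <= k < M) c k.
  by rewrite /P (big_cat_nat (n := N.+1)) // ltnW.
lra.
Qed.

Local Close Scope classical_set_scope.
Local Open Scope ring_scope.
Unset Implicit Arguments.

Theorem lemma3p4 (R : realType) (d : nat) (hd : (2 <= d)%N) (T : fock_op R d) :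
  bounded_op T ->
  block_diagonal T ->
  (exists c : nat -> R,
      (forall n : nat, opnorm_le (tensor_defect T n) (c n)) /\
      (exists B : R, forall N : nat, \sum_(1 <= n < N) c n <= B)) ->
  in_Cuntz_Toeplitz T.
Proof.
move=> _ bd [c [Hc [B HB]]] eps epsp.
have c0 : forall n, 0 <= c n by move=> n; case: (Hc n).
have [N HN] := tail_small c0 HB epsp.
exists (polyN T N); split; first exact: ltW.
move=> s x us.
pose M := (\sum_(u <- s) size u).+1.
have sM : forall u, u \in s -> (size u < M)%N.
  by move=> u us'; rewrite /M (bigD1_seq u) //= ltnS leq_addr.
have Hk : forall k, opnorm_le (Ek T k) (c k).
  by move=> k; apply: (opnorm_tensor k.+1 (Hc k)).
have H := opnorm_mono (HN M) (opnorm_sum N M Hk).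
case: H => _ H; apply: le_trans (H s x us).
rewrite le_eqVlt; apply/orP; left; apply/eqP.
apply: eq_big_seq => u us'; congr normsq; apply: eq_big_seq => w ws.
by rewrite (main_identity bd N (M := M)) // sM.
Qed.
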